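(* Let $\Bbbk$ be a field, $R=\Bbbk[x_1,\dots,x_m]$ with the standard $\mathbb Z^m$-grading, $M$ a finitely generated torsion-free $\mathbb Z^m$-graded $R$-module, and $\mathcal F_\bullet$ a minimal $\mathbb Z^m$-graded free resolution of $M$. Let $C$ be any basis of $F_0$ consisting of homogeneous elements. Then $\mathcal F_\bullet$ has a basis with minimal support $B=\coprod B_n$ consisting of homogeneous elements and such that $B_0=C$.
   Context: For a complex of free modules $\mathcal F_\bullet$ with differentials $f_n$, $f_0\colon F_0\to H_0(\mathcal F_\bullet)$ the canonical projection, and bases $B_n$ of $F_n$, $B=\coprod B_n$: the support of $y=\sum_{c\in B_n}a_cc$ is $\{c\in B_n:a_c\ne0\}$; $y$ is a cycle with minimal support if $y\in\operatorname{Ker}f_n$ and $\operatorname{supp}y$ does not properly contain the support of any nonzero element of $\operatorname{Ker}f_n$; $B$ is a basis with minimal support if $f_n(b)$ is a cycle with minimal support for all $n\ge1$ and $b\in B_n$. A $\mathbb Z^m$-graded free resolution is minimal if its differentials are homogeneous of degree $0$ and $f_n(F_n)\subseteq(x_1,\dots,x_m)F_{n-1}$ for $n\ge1$. *)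

(* Defs.v *)
From HB Require Import structures.
From mathcomp Require Import all_boot all_order all_algebra.
Set Implicit Arguments. Unset Strict Implicit. Unset Printing Implicit Defensive.
Import Order.TTheory GRing.Theory Num.Theory.
Local Open Scope ring_scope.

(* The polynomial ring k[x_1,...,x_m], built as iterated univariate polynomials:
   mpoly k 0 = k,  mpoly k (n+1) = (mpoly k n)[x]. *)
Fixpoint mpoly (k : fieldType) (m : nat) : idomainType :=
  match m with
  | 0 => (k : idomainType)
  | n.+1 => ({poly mpoly k n} : idomainType)
  end.

Fixpoint mcoef (k : fieldType) (m : nat) : mpoly k m -> seq nat -> k :=
  match m return mpoly k m -> seq nat -> k with
  | 0 => fun p _ => p
  | n.+1 => fun (p : {poly mpoly k n}) e => mcoef (p`_(head 0%N e)) (behead e)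
  end.

Definition degshift (e : seq nat) (d : seq int) : seq int :=
  [seq (x.1%:Z + x.2)%R | x <- zip e d].

(* A graded free module of rank r: R^r (row vectors), with the i-th standard
   basis vector of multidegree D i (a vector in Z^m, encoded as seq int of size m).
   [homog D a y]: y is homogeneous of multidegree a (standard Z^m-grading). *)
Definition homog (k : fieldType) (m r : nat) (D : 'I_r -> seq int)
  (a : seq int) (y : 'rV[mpoly k m]_r) : Prop :=
  size a = m /\
  forall (j : 'I_r) (e : seq nat), size e = m ->
    mcoef (y 0 j) e != 0 -> degshift e (D j) = a.

Definition homogeneous (k : fieldType) (m r : nat) (D : 'I_r -> seq int)
  (y : 'rV[mpoly k m]_r) : Prop := exists a, homog D a y.

(* A complex F_n = R^(r n), with f_{n+1} : F_{n+1} -> F_n given by v |-> v *m A n.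
   [kerF n y]: y lies in Ker f_n, where f_0 : F_0 -> H_0 is the projection,
   so Ker f_0 = Im f_1. *)
Definition kerF (k : fieldType) (m : nat) (r : nat -> nat)
  (A : forall n, 'M[mpoly k m]_(r n.+1, r n)) (n : nat) : 'rV[mpoly k m]_(r n) -> Prop :=
  match n return 'rV[mpoly k m]_(r n) -> Prop with
  | 0 => fun y => exists w : 'rV[mpoly k m]_(r 1), y = w *m A 0%N
  | n'.+1 => fun y => y *m A n' = 0
  end.

(* Support of y with respect to the basis given by the rows of the invertible
   matrix P. *)
Definition supp (k : fieldType) (m r : nat) (P : 'M[mpoly k m]_r)
  (y : 'rV[mpoly k m]_r) : {set 'I_r} :=
  [set j | (y *m invmx P) 0 j != 0].

Definition min_supp_cycle (k : fieldType) (m : nat) (r : nat -> nat)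
  (A : forall n, 'M[mpoly k m]_(r n.+1, r n)) (n : nat)
  (P : 'M[mpoly k m]_(r n)) (y : 'rV[mpoly k m]_(r n)) : Prop :=
  kerF A y /\
  forall z, kerF A z -> z != 0 -> ~ (supp P z \proper supp P y).

(* Family of bases B n (rows of invertible matrices) is a basis with minimal
   support: f_n(b) is a cycle with minimal support for all n >= 1, b in B_n. *)
Definition min_support_basis (k : fieldType) (m : nat) (r : nat -> nat)
  (A : forall n, 'M[mpoly k m]_(r n.+1, r n)) (B : forall n, 'M[mpoly k m]_(r n)) : Prop :=
  (forall n, B n \in unitmx) /\
  forall n (j : 'I_(r n.+1)), min_supp_cycle A (B n) (row j (B n.+1) *m A n).

(* Main.v *)
Require Import Defs.
From HB Require Import structures.
From mathcomp Require Import all_boot all_order all_algebra.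
From mathcomp Require Import zify.
From Stdlib Require Import Classical ClassicalEpsilon.
Import GRing.Theory.
Local Open Scope ring_scope.

Module E1.
Set Implicit Arguments. Unset Strict Implicit. Unset Printing Implicit Defensive.
Import GRing.Theory.
Local Open Scope ring_scope.

Section Engine.
Variable k : fieldType.

Fixpoint cfm (m : nat) : mpoly k m -> (nat -> nat) -> k :=
  match m return mpoly k m -> (nat -> nat) -> k with
  | 0 => fun p _ => p
  | n.+1 => fun (p : {poly mpoly k n}) e => cfm (p`_(e 0%N)) (fun i => e i.+1)
  end.

Fixpoint cst (m : nat) : k -> mpoly k m :=
  match m return k -> mpoly k m with
  | 0 => fun c => c
  | n.+1 => fun c => ((cst n c)%:P : {poly mpoly k n})
  end.

Fixpoint mono (m : nat) : (nat -> nat) -> mpoly k m :=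
  match m return (nat -> nat) -> mpoly k m with
  | 0 => fun _ => 1
  | n.+1 => fun e => ('X^(e 0%N) * (mono n (fun i => e i.+1))%:P : {poly mpoly k n})
  end.

Fixpoint sh (m : nat) : (nat -> nat) -> mpoly k m -> mpoly k m :=
  match m return (nat -> nat) -> mpoly k m -> mpoly k m with
  | 0 => fun _ p => p
  | n.+1 => fun b (p : {poly mpoly k n}) =>
      (\poly_(i < size p) sh (fun i => b i.+1) p`_(i + b 0%N) : {poly mpoly k n})
  end.

Fixpoint leqm (m : nat) (f e : nat -> nat) : bool :=
  match m with
  | 0 => true
  | n.+1 => (f 0%N <= e 0%N)%N && leqm n (fun i => f i.+1) (fun i => e i.+1)
  end.

Definition econs (i : nat) (e : nat -> nat) : nat -> nat :=
  fun j => match j with 0 => i | j'.+1 => e j' end.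

Lemma leqmP m f e : reflect (forall i, (i < m)%N -> (f i <= e i)%N) (leqm m f e).
Proof.
elim: m f e => [|n IH] f e /=; first by apply: ReflectT.
apply: (iffP andP) => [[h1 /IH h2] [|i] //= hi|h]; first exact: h2.
by split; [apply: h | apply/IH => i hi; apply: h].
Qed.

Lemma cfm_ext m (p : mpoly k m) e e' :
  (forall i, (i < m)%N -> e i = e' i) -> cfm p e = cfm p e'.
Proof.
elim: m p e e' => [|n IH] p e e' h //=.
rewrite (h 0%N) //; apply: IH => i hi; exact: h.
Qed.

Lemma cfm_eq0 m (p : mpoly k m) : (forall e, cfm p e = 0) -> p = 0.
Proof.
elim: m p => [|n IH] p h; first exact: (h (fun _ => 0%N)).
apply/polyP => i; rewrite coef0; apply: IH => e.
exact: (h (econs i e)).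
Qed.

Lemma cfm0 m e : cfm (0 : mpoly k m) e = 0.
Proof. by elim: m e => [|n IH] e //=; rewrite coef0 IH. Qed.

Lemma cfmD m (p q : mpoly k m) e : cfm (p + q) e = cfm p e + cfm q e.
Proof. by elim: m p q e => [|n IH] p q e //=; rewrite coefD IH. Qed.

Lemma cfmN m (p : mpoly k m) e : cfm (- p) e = - cfm p e.
Proof. by elim: m p e => [|n IH] p e //=; rewrite coefN IH. Qed.

Lemma cfmB m (p q : mpoly k m) e : cfm (p - q) e = cfm p e - cfm q e.
Proof. by rewrite cfmD cfmN. Qed.

Lemma cfm_sum m I (s : seq I) (P : pred I) (F : I -> mpoly k m) e :
  cfm (\sum_(i <- s | P i) F i) e = \sum_(i <- s | P i) cfm (F i) e.
Proof.
apply: (big_morph (fun p => cfm p e)) => [p q|]; [exact: cfmD | exact: cfm0].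
Qed.

Lemma cstD m a b : cst m (a + b) = cst m a + cst m b.
Proof. by elim: m => [|n IH] //=; rewrite IH polyCD. Qed.
Lemma cstM m a b : cst m (a * b) = cst m a * cst m b.
Proof. by elim: m => [|n IH] //=; rewrite IH polyCM. Qed.
Lemma cstN m a : cst m (- a) = - cst m a.
Proof. by elim: m => [|n IH] //=; rewrite IH polyCN. Qed.
Lemma cstB m a b : cst m (a - b) = cst m a - cst m b.
Proof. by rewrite cstD cstN. Qed.
Lemma cst1 m : cst m 1 = 1.
Proof. by elim: m => [|n IH] //=; rewrite IH. Qed.
Lemma cst0 m : cst m 0 = 0.
Proof. by elim: m => [|n IH] //=; rewrite IH. Qed.

Lemma cfm_cstM m c (p : mpoly k m) e : cfm (cst m c * p) e = c * cfm p e.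
Proof. by elim: m p e => [|n IH] p e //=; rewrite coefCM IH. Qed.

Lemma cfm_mono m f e : cfm (mono m f) e = if leqm m f e && leqm m e f then 1 else 0.
Proof.
elim: m f e => [|n IH] f e //=.
rewrite coefXnM coefC; case: ltnP => h1 /=.
  by rewrite cfm0.
have -> : (e 0%N <= f 0%N)%N = ((e 0%N - f 0%N)%N == 0%N) by rewrite subn_eq0.
case: (e 0%N - f 0%N)%N => [|d] /=; first exact: IH.
by rewrite cfm0 andbF.
Qed.

Lemma cfm_mulmono m (p : mpoly k m) f e :
  cfm (p * mono m f) e = if leqm m f e then cfm p (fun i => e i - f i)%N else 0.
Proof.
elim: m p f e => [|n IH] p f e /=; first by rewrite mulr1.
rewrite mulrA coefMC coefMXn; case: ltnP => h1 /=.
  by rewrite mul0r cfm0.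
by rewrite IH.
Qed.

Lemma mono0 m : mono m (fun _ => 0%N) = 1.
Proof. by elim: m => [|n IH] //=; rewrite IH mul1r. Qed.

Lemma mono_neq0 m f : mono m f != 0.
Proof.
apply/eqP => h; have := cfm_mono m f f; rewrite h cfm0.
have hl : leqm m f f by apply/leqmP.
by rewrite hl /= => /esym/eqP; rewrite oner_eq0.
Qed.

Lemma cfm_sh m b (p : mpoly k m) e : cfm (sh b p) e = cfm p (fun i => e i + b i)%N.
Proof.
elim: m b p e => [|n IH] b p e //=.
rewrite coef_poly; case: ltnP => h.
  by rewrite IH.
by rewrite cfm0 nth_default ?cfm0 //; apply: leq_trans h _; apply: leq_addr.
Qed.

Lemma cst_unit m c : c != 0 -> cst m c \is a GRing.unit.
Proof.
move=> hc; apply/GRing.unitrP; exists (cst m c^-1).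
by rewrite -!cstM mulVf ?mulfV // cst1.
Qed.


Variable m : nat.
Notation R := (mpoly k m).

Definition degb (d x : nat -> int) (e : nat -> nat) : bool :=
  all (fun i => (e i)%:Z + d i == x i) (iota 0 m).

Lemma degbP d x e : reflect (forall i, (i < m)%N -> (e i)%:Z + d i = x i) (degb d x e).
Proof.
apply: (iffP allP) => h i hi.
  by apply/eqP; apply: h; rewrite mem_iota.
by rewrite mem_iota in hi; apply/eqP; apply: h.
Qed.

Definition homF (d x : nat -> int) (p : R) : Prop :=
  forall e, cfm p e != 0 -> degb d x e.

Definition nonneg (d x : nat -> int) : bool := all (fun i => 0 <= x i - d i) (iota 0 m).
Definition expo (d x : nat -> int) : nat -> nat := fun i => `|x i - d i|%N.

Definition comp (d x : nat -> int) (p : R) : R :=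
  if nonneg d x then cst m (cfm p (expo d x)) * mono m (expo d x) else 0.

Lemma cfm_comp d x p e : cfm (comp d x p) e = if degb d x e then cfm p e else 0.
Proof.
rewrite /comp; case hn: (nonneg d x); last first.
  rewrite cfm0; case hd: (degb d x e) => //.
  move/negP: hn; case; apply/allP => i; rewrite mem_iota /= => hi.
  move/degbP: hd => /(_ i hi); lia.
rewrite cfm_cstM cfm_mono.
have hn' : forall i, (i < m)%N -> 0 <= x i - d i.
  by move=> i hi; move/allP: hn => /(_ i); rewrite mem_iota; apply.
case hd: (degb d x e).
  have he : forall i, (i < m)%N -> expo d x i = e i.
    by move=> i hi; move/degbP: hd => /(_ i hi); rewrite /expo; lia.
  have -> : leqm m (expo d x) e by apply/leqmP => i hi; rewrite he.
  have -> : leqm m e (expo d x) by apply/leqmP => i hi; rewrite he.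
  by rewrite mulr1; apply: cfm_ext.
case hl: (leqm m (expo d x) e && leqm m e (expo d x)); last by rewrite mulr0.
move/andP: hl => [/leqmP h1 /leqmP h2].
move/negP: hd; case; apply/degbP => i hi.
have := h1 i hi; have := h2 i hi; have := hn' i hi; rewrite /expo; lia.
Qed.

Lemma hom_comp d x p : homF d x p -> comp d x p = p.
Proof.
move=> h; apply/eqP; rewrite -subr_eq0; apply/eqP; apply: cfm_eq0 => e.
rewrite cfmB cfm_comp; case hd: (degb d x e); first by rewrite subrr.
case: (eqVneq (cfm p e) 0) => [->|/h]; first by rewrite subrr.
by rewrite hd.
Qed.

Lemma homF_comp d x p : homF d x (comp d x p).
Proof. by move=> e; rewrite cfm_comp; case: (degb d x e); rewrite ?eqxx. Qed.

Lemma comp0 d x : comp d x 0 = 0.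
Proof. by apply: cfm_eq0 => e; rewrite cfm_comp cfm0; case: ifP. Qed.

Lemma cfm_neq0 (p : R) : p != 0 -> exists e, cfm p e != 0.
Proof.
move=> hp; apply: NNPP => hn; move/eqP: hp; apply; apply: cfm_eq0 => e.
by case: (eqVneq (cfm p e) 0) => // h; exfalso; apply: hn; exists e.
Qed.

Lemma cfm_mulhom d x (p q : R) e : homF d x q ->
  cfm (p * q) e = if nonneg d x && leqm m (expo d x) e
                  then cfm q (expo d x) * cfm p (fun i => e i - expo d x i)%N else 0.
Proof.
move=> hq; rewrite -{1}(hom_comp hq) /comp; case: (nonneg d x) => /=.
  by rewrite mulrCA cfm_cstM cfm_mulmono; case: leqm => //; rewrite mulr0.
by rewrite mulr0 cfm0.
Qed.

Lemma degb_shift d d' x e : nonneg d d' -> leqm m (expo d d') e ->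
  degb d' x (fun l => e l - expo d d' l)%N = degb d x e.
Proof.
move=> /allP hn /leqmP hl.
apply/degbP/degbP => h i hi; have := h i hi; have := hl i hi;
  have := hn i; rewrite mem_iota /= hi /expo => /(_ isT); lia.
Qed.

Definition homV r (G : 'I_r -> nat -> int) x (y : 'rV[R]_r) : Prop :=
  forall j, homF (G j) x (y 0 j).
Definition compV r (G : 'I_r -> nat -> int) x (y : 'rV[R]_r) : 'rV[R]_r :=
  \row_j comp (G j) x (y 0 j).
Definition eqx (x x' : nat -> int) : Prop := forall i, (i < m)%N -> x i = x' i.

Lemma compV_mul r s (G : 'I_s -> nat -> int) (H : 'I_r -> nat -> int)
  (M : 'M[R]_(r, s)) (u : 'rV[R]_r) x :
  (forall i, homV G (H i) (row i M)) -> compV G x (u *m M) = compV H x u *m M.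
Proof.
move=> hM; apply/rowP => j; rewrite !mxE.
apply/eqP; rewrite -subr_eq0; apply/eqP; apply: cfm_eq0 => e.
have hM' : forall i, homF (G j) (H i) (M i j).
  by move=> i; have := hM i j; rewrite mxE.
rewrite cfmB cfm_comp !cfm_sum.
case hd: (degb (G j) x e).
  rewrite -sumrB; apply: big1 => i _; rewrite mxE !(cfm_mulhom _ _ (hM' i)).
  case hc: (nonneg _ _ && leqm _ _ _); last by rewrite subrr.
  move/andP: hc => [h1 h2].
  by rewrite cfm_comp degb_shift // hd subrr.
rewrite sub0r; apply/eqP; rewrite oppr_eq0; apply/eqP; apply: big1 => i _.
rewrite mxE !(cfm_mulhom _ _ (hM' i)).
case hc: (nonneg _ _ && leqm _ _ _) => //.
move/andP: hc => [h1 h2].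
by rewrite cfm_comp degb_shift // hd mulr0.
Qed.

Lemma homV_by_comp r (G : 'I_r -> nat -> int) x y :
  (forall x', compV G x' y != 0 -> eqx x' x) -> homV G x y.
Proof.
move=> h j e he; pose x' := fun i => (e i)%:Z + G j i.
have hc : compV G x' y != 0.
  apply/eqP => /rowP /(_ j); rewrite !mxE => /eqP hz; move: he.
  have : cfm (comp (G j) x' (y 0 j)) e = 0 by rewrite (eqP hz) cfm0.
  rewrite cfm_comp; have -> : degb (G j) x' e by apply/degbP.
  by move=> ->; rewrite eqxx.
have := h _ hc => hx; apply/degbP => i hi; rewrite -hx //.
Qed.

Lemma rowV_neq0 r (y : 'rV[R]_r) : y != 0 -> exists j, y 0 j != 0.
Proof.
move=> hy; apply: NNPP => hn; move/eqP: hy; apply; apply/rowP => j; rewrite mxE.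
apply/eqP; apply: NNPP => h; apply: hn; exists j; exact/negP.
Qed.

Lemma homV_comp_eqx r (G : 'I_r -> nat -> int) x x' y :
  homV G x y -> compV G x' y != 0 -> eqx x' x.
Proof.
move=> hy hc.
have [j hj] := rowV_neq0 hc.
move: hj; rewrite mxE => /cfm_neq0 [e]; rewrite cfm_comp.
case hd: (degb _ _ _); last by rewrite eqxx.
move=> /hy /degbP h1; move/degbP: hd => h2 i hi.
by rewrite -(h1 i hi) -(h2 i hi).
Qed.

Lemma compV_id r (G : 'I_r -> nat -> int) x y : homV G x y -> compV G x y = y.
Proof. by move=> h; apply/rowP => j; rewrite mxE hom_comp. Qed.

Lemma homV_compV r (G : 'I_r -> nat -> int) x y : homV G x (compV G x y).
Proof. by move=> j; rewrite mxE; apply: homF_comp. Qed.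

Lemma compV0 r (G : 'I_r -> nat -> int) x : compV G x 0 = 0.
Proof. by apply/rowP => j; rewrite !mxE comp0. Qed.

Lemma compV_eq0 r (G : 'I_r -> nat -> int) x (y : 'rV[R]_r) j : y 0 j = 0 -> compV G x y 0 j = 0.
Proof. by move=> h; rewrite mxE h comp0. Qed.

Lemma neq0_compV r (G : 'I_r -> nat -> int) (y : 'rV[R]_r) :
  y != 0 -> exists x, compV G x y != 0.
Proof.
move=> hy.
have [j hj] := rowV_neq0 hy.
have [e he] := cfm_neq0 hj.
exists (fun i => (e i)%:Z + G j i); apply/eqP => /rowP /(_ j); rewrite !mxE => hz.
move: he; have : cfm (comp (G j) (fun i => (e i)%:Z + G j i) (y 0 j)) e = 0 by rewrite hz cfm0.
have hd : degb (G j) (fun i => (e i)%:Z + G j i) e by apply/degbP.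
by rewrite cfm_comp hd => ->; rewrite eqxx.
Qed.

Lemma homV_mul r s (G : 'I_s -> nat -> int) (H : 'I_r -> nat -> int)
  (M : 'M[R]_(r, s)) (u : 'rV[R]_r) a :
  (forall i, homV G (H i) (row i M)) -> homV H a u -> homV G a (u *m M).
Proof.
move=> hM hu; apply: homV_by_comp => x'; rewrite (compV_mul _ _ hM).
case: (eqVneq (compV H x' u) 0) => [->|hc]; first by rewrite mul0mx eqxx.
by move=> _; apply: homV_comp_eqx hu hc.
Qed.

Lemma homV_coord r (G : 'I_r -> nat -> int) (H : 'I_r -> nat -> int)
  (P : 'M[R]_r) (u : 'rV[R]_r) a :
  P \in unitmx -> (forall i, homV G (H i) (row i P)) -> homV G a (u *m P) -> homV H a u.
Proof.
move=> hP hr hy; apply: homV_by_comp => x' hc; apply: (homV_comp_eqx hy).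
rewrite (compV_mul _ _ hr); apply/eqP => h; move/eqP: hc; apply.
by rewrite -(mulmxK hP (compV H x' u)) h mul0mx.
Qed.

Lemma homV_add r (G : 'I_r -> nat -> int) x (y1 y2 : 'rV[R]_r) :
  homV G x y1 -> homV G x y2 -> homV G x (y1 + y2).
Proof.
move=> h1 h2 j e; rewrite mxE cfmD => he.
case: (eqVneq (cfm (y1 0 j) e) 0) => [h|h]; last exact: h1.
by apply: h2; move: he; rewrite h add0r.
Qed.

Lemma homV_opp r (G : 'I_r -> nat -> int) x (y : 'rV[R]_r) :
  homV G x y -> homV G x (- y).
Proof. by move=> h j e; rewrite mxE cfmN oppr_eq0; apply: h. Qed.

Lemma homV_cstZ r (G : 'I_r -> nat -> int) x c (y : 'rV[R]_r) :
  homV G x y -> homV G x (cst m c *: y).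
Proof.
move=> h j e; rewrite mxE cfm_cstM mulf_eq0 negb_or => /andP [_]; exact: h.
Qed.

Lemma mono_ext m' f f' : (forall i, (i < m')%N -> f i = f' i) -> mono m' f = mono m' f'.
Proof.
elim: m' f f' => [|n IH] f f' h //=.
rewrite (h 0%N) // (IH (fun i => f i.+1) (fun i => f' i.+1)) // => i hi; exact: h.
Qed.

Lemma homF_deg0 d (p : R) : homF d d p -> p = cst m (cfm p (fun _ => 0%N)).
Proof.
move=> h; rewrite -{1}(hom_comp h) /comp.
have -> : nonneg d d by apply/allP => i _; rewrite subrr.
rewrite (mono_ext (f' := fun _ => 0%N)); last by move=> i _; rewrite /expo subrr.
rewrite mono0 mulr1; congr cst.
by apply: cfm_ext => i _; rewrite /expo subrr.
Qed.

Lemma hom_mono d x (p : R) : homF d x p -> p != 0 ->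
  nonneg d x /\ p = cst m (cfm p (expo d x)) * mono m (expo d x).
Proof.
move=> h hp; have := hom_comp h; rewrite /comp; case: (nonneg d x) => [e|e].
  by split => //; rewrite {1}e.
by move: hp; rewrite -e eqxx.
Qed.

End Engine.

Lemma mcoef_cfm (k : fieldType) m (p : mpoly k m) e : mcoef p e = cfm p (fun i => nth 0%N e i).
Proof.
elim: m p e => [|n IH] p e //=.
rewrite IH; case: e => [|a e] //=; apply: cfm_ext => i _; by rewrite !nth_nil.


Qed.

End E1.
Import E1.

Module M.
Set Implicit Arguments. Unset Strict Implicit. Unset Printing Implicit Defensive.
Import GRing.Theory.
Local Open Scope ring_scope.

Lemma cofactor_rows (R : comRingType) n (M N : 'M[R]_n) i j :
  (forall l, l != i -> row l M = row l N) -> cofactor M i j = cofactor N i j.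
Proof.
move=> h; rewrite /cofactor; congr (_ * \det _); apply/matrixP => a b; rewrite !mxE.
have := h (lift i a); rewrite eq_sym neq_lift => /(_ isT) => /rowP /(_ (lift j b)); rewrite !mxE; exact.
Qed.

Lemma det_rowrep (R : comRingType) n (w : 'rV[R]_n) j :
  \det (\matrix_i (if i == j then w else row i 1%:M)) = w 0 j.
Proof.
rewrite (expand_det_row _ j).
have hadj : \adj (1%:M : 'M[R]_n) = 1%:M.
  by have := mul_mx_adj (1%:M : 'M[R]_n); rewrite mul1mx det1.
rewrite (bigD1 j) //= big1 ?addr0.
  rewrite mxE eqxx (cofactor_rows _ (N := 1%:M)).
    have := congr1 (fun M : 'M[R]_n => M j j) hadj; rewrite !mxE eqxx /= => h1.
    by rewrite h1 mulr1.
  by move=> l hl; rewrite rowK (negPf hl).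
move=> l hl; rewrite (cofactor_rows _ (N := 1%:M)).
  by have := congr1 (fun M : 'M[R]_n => M l j) hadj; rewrite !mxE (negPf hl) /= => ->; rewrite mulr0.
by move=> l' hl'; rewrite rowK (negPf hl').
Qed.
Lemma ar1 (b e : nat) (d0 x : int) : b%:Z + d0 = x -> (`|x - d0| <= e)%N -> (b <= e)%N.
Proof. lia. Qed.
Lemma ar2 (b e e' : nat) (d0 di x a : int) : 0 <= a - d0 -> (`|a - d0| <= e)%N ->
  ((e - `|a - d0|)%N)%:Z + di = x -> b%:Z + d0 = x -> e'%:Z + di = a -> (b <= e)%N.
Proof. lia. Qed.
Lemma ar3 (b e : nat) : (b <= e)%N -> (e - b + b)%N = e.
Proof. lia. Qed.
Lemma ar4 (b e : nat) (d0 di x a : int) : ((e + b - `|x - d0|)%N)%:Z + di = a ->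
  b%:Z + d0 = x -> (`|x - d0| <= e + b)%N -> e%:Z + di = a.
Proof. lia. Qed.
Lemma ar5 (b e al : nat) (d0 di x a : int) : ((e + b - `|a - d0|)%N)%:Z + di = x ->
  b%:Z + d0 = x -> al%:Z + d0 = a -> (`|a - d0| <= e + b)%N -> e%:Z + di = a.
Proof. lia. Qed.

Section Main.
Unset Implicit Arguments.
Variables (k : fieldType) (m : nat) (r : nat -> nat).
Variable D : forall n, 'I_(r n) -> seq int.
Variable A : forall n, 'M[mpoly k m]_(r n.+1, r n).
Notation R := (mpoly k m).
Local Notation mono := (@E1.mono k).
Local Notation cst := (@E1.cst k).
Definition Gr n : 'I_(r n) -> nat -> int := fun j i => nth 0 (D n j) i.
Hypothesis hhomV : forall n i, homV (Gr n) (Gr n.+1 i) (row i (A n)).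
Hypothesis hexact : forall n (v : 'rV[R]_(r n.+1)),
      v *m A n = 0 -> exists w : 'rV[R]_(r n.+2), v = w *m A n.+1.
Hypothesis hcomplex : forall n, A n.+1 *m A n = 0.
Hypothesis htf : forall (c : R) (v : 'rV[R]_(r 0%N)), c != 0 ->
      (exists w : 'rV[R]_(r 1%N), c *: v = w *m A 0%N) ->
      exists w : 'rV[R]_(r 1%N), v = w *m A 0%N.

Set Implicit Arguments.

Lemma kerF_add n (y1 y2 : 'rV[R]_(r n)) : kerF A y1 -> kerF A y2 -> kerF A (y1 + y2).
Proof.
case: n y1 y2 => [|n] y1 y2 /=.
  by move=> [w1 ->] [w2 ->]; exists (w1 + w2); rewrite mulmxDl.
by move=> h1 h2; rewrite mulmxDl h1 h2 addr0.
Qed.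

Lemma kerF_scale n c (y : 'rV[R]_(r n)) : kerF A y -> kerF A (c *: y).
Proof.
case: n y => [|n] y /=.
  by move=> [w ->]; exists (c *: w); rewrite scalemxAl.
by move=> h; rewrite -scalemxAl h scaler0.
Qed.

Lemma kerF_opp n (y : 'rV[R]_(r n)) : kerF A y -> kerF A (- y).
Proof. by move=> h; rewrite -scaleN1r; apply: kerF_scale. Qed.

Lemma kerF_tf n c (y : 'rV[R]_(r n)) : c != 0 -> kerF A (c *: y) -> kerF A y.
Proof.
case: n y => [|n] y /= hc.
  by move=> h; apply: (htf c y hc).
by rewrite -scalemxAl => /eqP; rewrite scalemx_eq0 (negPf hc) /= => /eqP.
Qed.

Lemma kerF_comp n x (z : 'rV[R]_(r n)) : kerF A z -> kerF A (compV (Gr n) x z).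
Proof.
case: n z => [|n] z /=.
  by move=> [w ->]; exists (compV (Gr 1%N) x w); rewrite (compV_mul _ _ (hhomV 0%N)).
by move=> h; rewrite -(compV_mul _ _ (hhomV n)) h compV0.
Qed.

Lemma kerF_im n (y : 'rV[R]_(r n)) : kerF A y -> exists h : 'rV[R]_(r n.+1), y = h *m A n.
Proof.
case: n y => [|n] y /=; first by [].
by move=> h; apply: hexact.
Qed.

Lemma kerF_img n (w : 'rV[R]_(r n.+1)) : kerF A (w *m A n).
Proof.
case: n w => [|n] w /=; first by exists w.
by rewrite -mulmxA hcomplex mulmx0.
Qed.

Lemma subr_neq0_or (a b : k) : a - b != 0 -> a != 0 \/ b != 0.
Proof.
case: (eqVneq a 0) => [->|h]; last by left.
by rewrite sub0r oppr_eq0; right.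
Qed.

Lemma nonmin n (P : 'M[R]_(r n)) (dl : 'I_(r n) -> nat -> int) (y : 'rV[R]_(r n)) a :
  P \in unitmx -> (forall i, homV (Gr n) (dl i) (row i P)) -> homV (Gr n) a y ->
  kerF A y -> ~ min_supp_cycle A P y ->
  exists s : 'rV[R]_(r n), [/\ homV dl a s, kerF A (s *m P), s != 0,
     (forall i, s 0 i != 0 -> (y *m invmx P) 0 i != 0) &
     exists i0, (y *m invmx P) 0 i0 != 0 /\ s 0 i0 = 0].
Proof.
move=> hP hrow hy hky hnm.
set u := y *m invmx P.
have hyu : y = u *m P by rewrite mulmxKV.
have hu : homV dl a u by apply: (homV_coord hP hrow); rewrite -hyu.
have [z [hkz [hz0 hpr]]] : exists z : 'rV[R]_(r n), kerF A z /\ z != 0 /\ supp P z \proper supp P y.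
  apply: NNPP => hn; apply: hnm; split => // z hkz hz hpr; apply: hn; exists z; split => //.
set v := z *m invmx P.
have hzv : z = v *m P by rewrite mulmxKV.
have [x hx] := neq0_compV (Gr n) hz0.
set z' := compV (Gr n) x z in hx.
have hkz' : kerF A z' := kerF_comp x hkz.
set v' := compV dl x v.
have hvz : v' *m P = z' by rewrite /z' hzv (compV_mul _ _ hrow).
have hv'0 : v' != 0 by apply/eqP => h; move/eqP: hx; apply; rewrite -hvz h mul0mx.
have hv' : homV dl x v' by apply: homV_compV.
move/properP: hpr => [hsub [i1 hi1y hi1z]].
have hvu : forall i, v 0 i != 0 -> u 0 i != 0.
  move=> i hi; have : i \in supp P z by rewrite /supp inE.
  by move/(subsetP hsub); rewrite /supp inE.
have hv'v : forall i, v' 0 i != 0 -> v 0 i != 0.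
  by move=> i; apply: contraNneq => h; rewrite /v' compV_eq0.
have hu1 : u 0 i1 != 0 by move: hi1y; rewrite /supp inE.
have hv1 : v 0 i1 = 0 by move: hi1z; rewrite /supp inE negbK => /eqP.
have hv'1 : v' 0 i1 = 0 by rewrite /v' compV_eq0.
have [i0 hi0] := rowV_neq0 hv'0.
have hv'z : forall i, v 0 i = 0 -> v' 0 i = 0 by move=> i h; rewrite /v' compV_eq0.
clearbody z' v' u v.
have hu0 : u 0 i0 != 0 := hvu _ (hv'v _ hi0).
have [be hbe] := cfm_neq0 hi0.
have hbed := hv' i0 be hbe.
have [al hal] := cfm_neq0 hu0.
have hald := hu i0 al hal.
set t := v' 0 i0 *: u - u 0 i0 *: v'.
have hti : forall i, t 0 i = u 0 i * v' 0 i0 - v' 0 i * u 0 i0.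
  by move=> i; rewrite /t !mxE mulrC [u 0 i0 * _]mulrC.
have ht : forall i e, cfm (t 0 i) e != 0 -> leqm m be e.
  move=> i e; rewrite hti cfmB (cfm_mulhom _ _ (hv' i0)) (cfm_mulhom _ _ (hu i0)).
  case h1: (nonneg m (dl i0) x && leqm m (expo (dl i0) x) e).
    move=> _; move/andP: h1 => [_ /leqmP hl]; apply/leqmP => l hl'.
    move/degbP: hbed => /(_ l hl') hb; exact: (ar1 hb (hl l hl')).
  case h2: (nonneg m (dl i0) a && leqm m (expo (dl i0) a) e); last by rewrite subrr eqxx.
  rewrite sub0r oppr_eq0 mulf_eq0 negb_or => /andP [_ hc].
  have hvi : v' 0 i != 0 by apply/eqP => h; move: hc; rewrite h cfm0 eqxx.
  have [e' he'] := cfm_neq0 (hvu _ (hv'v _ hvi)).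
  have hd1 := hu i e' he'.
  have hd2 := hv' i _ hc.
  move/andP: h2 => [/allP hn /leqmP hl]; apply/leqmP => l hl'.
  move/degbP: hd1 => /(_ l hl') H1; move/degbP: hd2 => /(_ l hl') /= H2.
  move/degbP: hbed => /(_ l hl') H3.
  have H4 : 0 <= a l - dl i0 l by apply: hn; rewrite mem_iota leq0n add0n hl'.
  exact: (ar2 H4 (hl l hl') H2 H3 H1).
set s := \row_i sh be (t 0 i).
have hts : forall i, t 0 i = mono m be * s 0 i.
  move=> i; rewrite [s 0 i]mxE; apply/eqP; rewrite -subr_eq0; apply/eqP; apply: cfm_eq0 => e.
  rewrite cfmB mulrC cfm_mulmono.
  case hl: (leqm m be e); last first.
    rewrite subr0; case: (eqVneq (cfm (t 0 i) e) 0) => // /ht; by rewrite hl.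
  rewrite cfm_sh.
  have -> : cfm (t 0 i) (fun l => e l - be l + be l)%N = cfm (t 0 i) e.
    by apply: cfm_ext => l hl'; move/leqmP: hl => /(_ l hl'); apply: ar3.
  by rewrite subrr.
have hs : homV dl a s.
  move=> i e; rewrite mxE cfm_sh hti cfmB => /subr_neq0_or [H1|H2].
    move: H1; rewrite (cfm_mulhom _ _ (hv' i0)).
    case h1: (nonneg m (dl i0) x && leqm m (expo (dl i0) x) _); last by rewrite eqxx.
    rewrite mulf_eq0 negb_or => /andP [_ /(hu i) hd].
    move/andP: h1 => [_ /leqmP hl].
    apply/degbP => l hl'; move/degbP: hd => /(_ l hl') /= H1.
    move/degbP: hbed => /(_ l hl') H2; exact: (ar4 H1 H2 (hl l hl')).
  move: H2; rewrite (cfm_mulhom _ _ (hu i0)).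
  case h2: (nonneg m (dl i0) a && leqm m (expo (dl i0) a) _); last by rewrite eqxx.
  rewrite mulf_eq0 negb_or => /andP [_ /(hv' i) hd].
  move/andP: h2 => [_ /leqmP hl].
  apply/degbP => l hl'; move/degbP: hd => /(_ l hl') /= H1.
  move/degbP: hbed => /(_ l hl') H2; move/degbP: hald => /(_ l hl') H3.
  exact: (ar5 H1 H2 H3 (hl l hl')).
have hsP : kerF A (s *m P).
  apply: (@kerF_tf _ (mono m be)); first exact: mono_neq0.
  have -> : mono m be *: (s *m P) = v' 0 i0 *: y - u 0 i0 *: z'.
    rewrite scalemxAl.
    have -> : mono m be *: s = t by apply/rowP => i; rewrite [LHS]mxE -hts.
    by rewrite /t mulmxBl -!scalemxAl hvz -hyu.
  apply: kerF_add; first exact: kerF_scale.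
  by apply: kerF_opp; apply: kerF_scale.
exists s; split => //.
- have : t 0 i1 != 0 by rewrite hti hv'1 mul0r subr0 mulf_neq0.
  rewrite hts mulf_eq0 negb_or => /andP [_ h].
  by apply/eqP => hs0; move: h; rewrite hs0 mxE eqxx.
- move=> i; apply: contraNneq => hui.
  have hvi : v 0 i = 0 by case: (eqVneq (v 0 i) 0) => // /hvu; rewrite hui eqxx.
  have hv'i : v' 0 i = 0 by apply: hv'z.
  have : t 0 i = 0 by rewrite hti hv'i hui !mul0r subrr.
  by rewrite hts => /eqP; rewrite mulf_eq0 (negPf (mono_neq0 _ _ _)).
- exists i0; split => //.
  have : t 0 i0 = 0 by rewrite hti mulrC subrr.
  by rewrite hts => /eqP; rewrite mulf_eq0 (negPf (mono_neq0 _ _ _)) /= => /eqP.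
Qed.

Lemma rowrep_mul q (Q : 'M[R]_q) (w : 'rV[R]_q) j : Q \in unitmx ->
  \matrix_i (if i == j then w else row i Q) =
  \matrix_i (if i == j then w *m invmx Q else row i 1%:M) *m Q.
Proof.
move=> hQ; apply/row_matrixP => i; rewrite row_mul !rowK.
by case: eqP => _; [rewrite mulmxKV | rewrite -row_mul mul1mx].
Qed.

Lemma rowrep_unit q (Q : 'M[R]_q) (w : 'rV[R]_q) j : Q \in unitmx ->
  (w *m invmx Q) 0 j \is a GRing.unit ->
  \matrix_i (if i == j then w else row i Q) \in unitmx.
Proof.
by move=> hQ hu; rewrite rowrep_mul // unitmx_mul hQ andbT unitmxE det_rowrep.
Qed.

Lemma improve n (P : 'M[R]_(r n)) dl (Q : 'M[R]_(r n.+1)) ep j :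
  P \in unitmx -> (forall i, homV (Gr n) (dl i) (row i P)) ->
  Q \in unitmx -> (forall i, homV (Gr n.+1) (ep i) (row i Q)) ->
  ~ min_supp_cycle A P (row j Q *m A n) ->
  exists r' : 'rV[R]_(r n.+1), [/\ homV (Gr n.+1) (ep j) r',
     (\matrix_i (if i == j then r' else row i Q)) \in unitmx &
     supp P (r' *m A n) \proper supp P (row j Q *m A n)].
Proof.
move=> hP hrP hQ hrQ hnm.
set a := ep j.
set y := row j Q *m A n.
have hy : homV (Gr n) a y := homV_mul (hhomV n) (hrQ j).
have hky : kerF A y := kerF_img (row j Q).
have [s [hs hsP hs0 hsu [i0 [hu0 hs00]]]] := nonmin hP hrP hy hky hnm.
have [h hh] := kerF_im hsP.
set h' := compV (Gr n.+1) a h.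
have hsPh : homV (Gr n) a (s *m P) := homV_mul hrP hs.
have hh' : h' *m A n = s *m P.
  by rewrite /h' -(compV_mul _ _ (hhomV n)) -hh compV_id.
have hh'h : homV (Gr n.+1) a h' by apply: homV_compV.
set g := h' *m invmx Q.
have hg : homV ep a g by apply: (homV_coord hQ hrQ); rewrite /g mulmxKV.
have hgj : g 0 j = cst m (cfm (g 0 j) (fun _ => 0%N)) := homF_deg0 (hg j).
set u := y *m invmx P in hsu hu0.
have hu : homV dl a u by apply: (homV_coord hP hrP); rewrite /u mulmxKV.
have hgd : h' *m invmx Q = g by [].
have hud : y *m invmx P = u by [].
clearbody g u h'.
set cg := cfm (g 0 j) (fun _ => 0%N) in hgj.
have [i1 hi1] := rowV_neq0 hs0.
have hu1 := hsu _ hi1.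
have [_ hue] := hom_mono (hu i1) hu1.
have [_ hse] := hom_mono (hs i1) hi1.
set f := expo (dl i1) a in hue hse.
set cu := cfm (u 0 i1) f in hue.
set cs := cfm (s 0 i1) f in hse.
have hcs : cs != 0 by apply/eqP => h0; move: hi1; rewrite hse h0 cst0 mul0r eqxx.
set mu := cu / cs.
have hkill : u 0 i1 - cst m mu * s 0 i1 = 0.
  by rewrite hse mulrA -cstM divfK // -hue subrr.
case: (eqVneq (1 - mu * cg) 0) => hcase.
  exists h'; split => //.
    apply: rowrep_unit => //; rewrite hgd hgj; apply: cst_unit.
    by apply/eqP => hc0; move: hcase; rewrite hc0 mulr0 subr0 => /eqP; rewrite oner_eq0.
  rewrite hh'; apply/properP; split.
    by apply/subsetP => i; rewrite /supp !inE mulmxK // hud; apply: hsu.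
  exists i0; first by rewrite /supp inE hud.
  by rewrite /supp inE mulmxK // hs00 eqxx.
exists (row j Q - cst m mu *: h'); split.
- apply: homV_add; first exact: hrQ.
  by apply: homV_opp; apply: homV_cstZ.
- apply: rowrep_unit => //.
  rewrite mulmxBl -scalemxAl hgd -row_mul mulmxV // !mxE eqxx hgj -cstM.
  have -> : (1 : R) = cst m 1 by rewrite cst1.
  by rewrite mulr1n -cstB; apply: cst_unit.
- rewrite mulmxBl -scalemxAl hh'; apply/properP; split.
    apply/subsetP => i; rewrite /supp !inE mulmxBl -scalemxAl mulmxK // hud !mxE.
    apply: contraNneq => hui.
    have hsi : s 0 i = 0 by case: (eqVneq (s 0 i) 0) => // /hsu; rewrite hui eqxx.
    by rewrite hui hsi mulr0 subrr.
  exists i1; first by rewrite /supp inE hud.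
  by rewrite /supp inE mulmxBl -scalemxAl mulmxK // hud !mxE hkill eqxx.
Qed.

Definition meas n (P : 'M[R]_(r n)) (Q : 'M[R]_(r n.+1)) :=
  (\sum_(j < r n.+1) #|supp P (row j Q *m A n)|)%N.

Lemma loop n (P : 'M[R]_(r n)) dl : P \in unitmx ->
  (forall i, homV (Gr n) (dl i) (row i P)) ->
  forall N (Q : 'M[R]_(r n.+1)) ep, (meas P Q < N)%N -> Q \in unitmx ->
  (forall i, homV (Gr n.+1) (ep i) (row i Q)) ->
  exists Q' : 'M[R]_(r n.+1), [/\ Q' \in unitmx,
    (forall i, homV (Gr n.+1) (ep i) (row i Q')) &
    forall j, min_supp_cycle A P (row j Q' *m A n)].
Proof.
move=> hP hrP; elim=> [//|N IH] Q ep hm hQ hrQ.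
case: (classic (forall j, min_supp_cycle A P (row j Q *m A n))) => hall.
  by exists Q.
have [j hj] : exists j, ~ min_supp_cycle A P (row j Q *m A n).
  by apply: not_all_ex_not.
have [r' [hr' hu hpr]] := improve hP hrP hQ hrQ hj.
apply: (IH (\matrix_i (if i == j then r' else row i Q)) ep) => //.
- have h : (meas P (\matrix_i (if i == j then r' else row i Q)) < meas P Q)%N.
    rewrite /meas (bigD1 j) //= [X in (_ < X)%N](bigD1 j) //= rowK eqxx.
    rewrite (eq_bigr (fun i => #|supp P (row i Q *m A n)|)); last first.
      by move=> i hi; rewrite rowK (negPf hi).
    by rewrite ltn_add2r; apply: proper_card.
  exact: leq_trans h hm.
- by move=> i; rewrite rowK; case: eqP => [->|_] //; exact: hrQ.
Qed.

Lemma homV_one q (G : 'I_q -> nat -> int) i : homV G (G i) (row i (1%:M : 'M[R]_q)).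
Proof.
move=> j e; rewrite !mxE; case hb: (i == j); last by rewrite mulr0n cfm0 eqxx.
move/eqP: hb => <-.
rewrite mulr1n -(mono0 k m) cfm_mono.
case hl: (leqm m _ e && leqm m e _); last by rewrite eqxx.
move/andP: hl => [_ /leqmP hl] _; apply/degbP => l hl'.
by have := hl l hl'; rewrite leqn0 => /eqP ->; rewrite add0r.
Qed.

Lemma step n (P : 'M[R]_(r n)) : P \in unitmx ->
  (forall i, exists a, homV (Gr n) a (row i P)) ->
  exists Q : 'M[R]_(r n.+1), [/\ Q \in unitmx,
    (forall i, exists a, homV (Gr n.+1) a (row i Q)) &
    forall j, min_supp_cycle A P (row j Q *m A n)].
Proof.
move=> hP hP'.
have [dl hdl] : exists dl : 'I_(r n) -> nat -> int, forall i, homV (Gr n) (dl i) (row i P).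
  exists (fun i => proj1_sig (constructive_indefinite_description _ (hP' i))).
  by move=> i; exact: (proj2_sig (constructive_indefinite_description _ (hP' i))).
have [Q' [h1 h2 h3]] := loop hP hdl (ltnSn (meas P 1%:M)) (unitmx1 _ _) (homV_one (Gr n.+1)).
by exists Q'; split => // i; exists (Gr n.+1 i); exact: h2.
Qed.

Lemma build (C : 'M[R]_(r 0%N)) : C \in unitmx ->
  (forall i, exists a, homV (Gr 0%N) a (row i C)) ->
  exists B : forall n, 'M[R]_(r n), [/\ B 0%N = C, forall n, B n \in unitmx,
    forall n i, exists a, homV (Gr n) a (row i (B n)) &
    forall n j, min_supp_cycle A (B n) (row j (B n.+1) *m A n)].
Proof.
move=> hC hCh.
pose Good n (P : 'M[R]_(r n)) := P \in unitmx /\ forall i, exists a, homV (Gr n) a (row i P).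
have st : forall n (P : {P : 'M[R]_(r n) | Good n P}), {Q : 'M[R]_(r n.+1) |
    Good n.+1 Q /\ forall j, min_supp_cycle A (sval P) (row j Q *m A n)}.
  move=> n [P [hP hrP]]; apply: constructive_indefinite_description.
  by have [Q [h1 h2 h3]] := step hP hrP; exists Q.
pose bas := fix bas n : {P : 'M[R]_(r n) | Good n P} :=
  match n return {P : 'M[R]_(r n) | Good n P} with
  | 0 => exist _ C (conj hC hCh)
  | n'.+1 => let q := st n' (bas n') in exist _ (sval q) (proj1 (svalP q))
  end.
exists (fun n => sval (bas n)); split.
- by [].
- by move=> n; case: (bas n) => P [].
- by move=> n; case: (bas n) => P [].
- by move=> n j; exact: ((proj2 (svalP (st n (bas n)))) j).
Qed.

End Main.

End M.
Import M.

Set Implicit Arguments. Unset Strict Implicit. Unset Printing Implicit Defensive.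
Import GRing.Theory.
Local Open Scope ring_scope.

Lemma nth_degshift (e : seq nat) (d : seq int) i : size e = size d -> (i < size e)%N ->
  nth 0 (degshift e d) i = (nth 0%N e i)%:Z + nth 0 d i.
Proof.
move=> hs hi; rewrite /degshift (nth_map (0%N, 0)) ?size_zip -?hs ?minnn //.
by rewrite nth_zip.
Qed.

Lemma homog_to_homV (k : fieldType) m q (Dq : 'I_q -> seq int)
  (hq : forall j, size (Dq j) = m) a (y : 'rV[mpoly k m]_q) :
  homog Dq a y -> homV (fun j i => nth 0 (Dq j) i) (fun i => nth 0 a i) y.
Proof.
move=> [ha h] j e he; apply/degbP => i hi /=.
have hs : size (mkseq e m) = m by rewrite size_mkseq.
have hne : mcoef (y 0 j) (mkseq e m) != 0.
  rewrite mcoef_cfm; have -> : cfm (y 0 j) (fun i => nth 0%N (mkseq e m) i) = cfm (y 0 j) e.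
    by apply: cfm_ext => l hl; rewrite nth_mkseq.
  exact: he.
have hd := h j _ hs hne.
by rewrite -hd nth_degshift ?size_mkseq ?hq // nth_mkseq.
Qed.

Lemma homV_to_homog (k : fieldType) m q (Dq : 'I_q -> seq int)
  (hq : forall j, size (Dq j) = m) x (y : 'rV[mpoly k m]_q) :
  homV (fun j i => nth 0 (Dq j) i) x y -> homogeneous Dq y.
Proof.
move=> hx; exists (mkseq x m); split; first by rewrite size_mkseq.
move=> j e he hne; rewrite mcoef_cfm in hne; have /degbP hd := hx j _ hne.
apply: (@eq_from_nth _ 0); first by rewrite size_map size_zip he hq minnn size_mkseq.
move=> i; rewrite size_map size_zip he hq minnn => hi.
by rewrite nth_degshift ?he ?hq // nth_mkseq // hd.
Qed.

Unset Implicit Arguments.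
Theorem mainTheorem6 (k : fieldType) (m : nat)
  (r : nat -> nat)                                  (* ranks of F_n *)
  (D : forall n, 'I_(r n) -> seq int)               (* degree shifts of F_n *)
  (A : forall n, 'M[mpoly k m]_(r n.+1, r n))       (* f_{n+1} : F_{n+1} -> F_n *)
  (hD : forall n (j : 'I_(r n)), size (D n j) = m)
  (* differentials homogeneous of degree 0 *)
  (hhom : forall n (j : 'I_(r n.+1)), homog (D n) (D n.+1 j) (row j (A n)))
  (* exactness at F_n for n >= 1 *)
  (hexact : forall n (v : 'rV[mpoly k m]_(r n.+1)),
      v *m A n = 0 -> exists w : 'rV[mpoly k m]_(r n.+2), v = w *m A n.+1)
  (hcomplex : forall n, A n.+1 *m A n = 0)
  (* minimality: f_n(F_n) in (x_1,...,x_m) F_{n-1} *)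
  (hmin : forall n i j, mcoef (A n i j) (nseq m 0%N) = 0)
  (* M = H_0 = coker f_1 is torsion-free *)
  (htf : forall (c : mpoly k m) (v : 'rV[mpoly k m]_(r 0%N)), c != 0 ->
      (exists w : 'rV[mpoly k m]_(r 1%N), c *: v = w *m A 0%N) ->
      exists w : 'rV[mpoly k m]_(r 1%N), v = w *m A 0%N)
  (* C : a homogeneous basis of F_0 (rows of an invertible matrix) *)
  (C : 'M[mpoly k m]_(r 0%N)) (hCu : C \in unitmx)
  (hCh : forall j, homogeneous (D 0%N) (row j C)) :
  exists B : forall n, 'M[mpoly k m]_(r n),
    min_support_basis A B /\
    (forall n j, homogeneous (D n) (row j (B n))) /\
    B 0%N = C.
Proof.
have hhomV : forall n i, homV (Gr r D n) (Gr r D n.+1 i) (row i (A n)).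
  by move=> n i; apply: homog_to_homV (hD n) _ _ (hhom n i).
have hCh' : forall i, exists a, homV (Gr r D 0%N) a (row i C).
  move=> i; have [a ha] := hCh i; exists (fun l => nth 0 a l).
  exact: homog_to_homV (hD 0%N) _ _ ha.
have [B [hB0 hBu hBh hBm]] := build hhomV hexact hcomplex htf hCu hCh'.
exists B; split; first by split.
split => // n j; have [a ha] := hBh n j; exact: homV_to_homog (hD n) _ _ ha.
Qed.
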